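(* Let $H=(V,E)$, $H_1=(V_1,E_1)$, $H_2=(V_2,E_2)$ be hypergraphs with $V=V_1\cup V_2$ and $E=E_1\cup E_2$. If $V_1\cap V_2\in (L(V_1)\cup E_1)\cap(L(V_2)\cup E_2)$, then \[\mathrm{MC}^H=\overline{\mathrm{MC}}^{H_1}\cap\overline{\mathrm{MC}}^{H_2},\qquad\text{where } \overline{\mathrm{MC}}^{H_k}=\{w\in\mathbb{R}^{\mathcal{J}^H}: \operatorname{proj}_{\mathcal{J}^{H_k}}w\in\mathrm{MC}^{H_k}\},\ k=1,2.\]
   Context: Let $n$ be a positive integer, $[n]=\{1,\dots,n\}$. A hypergraph $H=(V,E)$ here has as vertex set $V$ a family of pairwise disjoint subsets of $[n]$, each of cardinality at least $2$, and hyperedge set $E$ consisting of subsets $e\subseteq V$ with $|e|\ge 2$. Write $L(V)=\{\{I\}: I\in V\}$. For a nonempty $e\subseteq V$, $\mathcal{J}^e$ denotes the family of sets $J\subseteq \bigcup_{I\in e} I$ with $|J\cap I|=1$ for every $I\in e$. Let $\mathcal{J}^H=\bigcup_{e\in L(V)\cup E}\mathcal{J}^e$ (so $\mathcal{J}^{H_k}\subseteq\mathcal{J}^H$). For $w\in\mathbb{R}^{\mathcal{J}^H}$ write $w_i=w_{\{i\}}$ and $w(A)=\sum_{i\in A}w_i$. Let $\mathscr{S}^H=\{w\in\{0,1\}^{\mathcal{J}^H}: w(I)=1\ \forall I\in V;\ w_J=\prod_{i\in J}w_i\ \forall J\in\mathcal{J}^H, |J|>1\}$ and $\mathrm{MC}^H=\operatorname{conv}\mathscr{S}^H$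 (analogously for $H_1,H_2$). $\operatorname{proj}_{S'}$ extracts the coordinates indexed by $S'$. *)

(* Defs.v *)
From HB Require Import structures.
From mathcomp Require Import all_boot all_order all_algebra.
From mathcomp Require Import reals.
Set Implicit Arguments. Unset Strict Implicit. Unset Printing Implicit Defensive.
Import Order.TTheory GRing.Theory Num.Theory.
Local Open Scope ring_scope.

(* Ground set [n] is modelled by 'I_n = {0,...,n-1}.
   Vertices: subsets of 'I_n; a vertex set V : {set {set 'I_n}};
   a hyperedge is a set of vertices, E : {set {set {set 'I_n}}}. *)

Definition is_hypergraph (n : nat) (V : {set {set 'I_n}})
    (E : {set {set {set 'I_n}}}) : Prop :=
  (forall I, I \in V -> (2 <= #|I|)%N) /\
  (forall I J, I \in V -> J \in V -> I != J -> [disjoint I & J]) /\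
  (forall e, e \in E -> e \subset V /\ (2 <= #|e|)%N).

Definition Lv (n : nat) (V : {set {set 'I_n}}) : {set {set {set 'I_n}}} :=
  [set [set I] | I in V].

Definition Je (n : nat) (e : {set {set 'I_n}}) : {set {set 'I_n}} :=
  [set J : {set 'I_n} | (J \subset \bigcup_(I in e) I) &&
                        [forall I in e, #|J :&: I| == 1%N]].

Definition JH (n : nat) (V : {set {set 'I_n}}) (E : {set {set {set 'I_n}}})
    : {set {set 'I_n}} :=
  \bigcup_(e in Lv V :|: E) Je e.

(* A vector of R^{J^H} is represented by a function {set 'I_n} -> R that
   vanishes outside J^H; w_i := w {i}. *)
Definition supported (R : realType) (n : nat) (V : {set {set 'I_n}})
    (E : {set {set {set 'I_n}}}) (w : {set 'I_n} -> R) : Prop :=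
  forall J, J \notin JH V E -> w J = 0.

Definition SH (R : realType) (n : nat) (V : {set {set 'I_n}})
    (E : {set {set {set 'I_n}}}) (w : {set 'I_n} -> R) : Prop :=
  supported V E w /\
  (forall J, J \in JH V E -> w J = 0 \/ w J = 1) /\
  (forall I, I \in V -> \sum_(i in I) w [set i] = 1) /\
  (forall J, J \in JH V E -> (1 < #|J|)%N -> w J = \prod_(i in J) w [set i]).

Definition conv (R : realType) (T : Type) (P : (T -> R) -> Prop)
    (w : T -> R) : Prop :=
  exists (k : nat) (lam : 'I_k -> R) (p : 'I_k -> T -> R),
    (forall i, 0 <= lam i) /\ \sum_(i < k) lam i = 1 /\
    (forall i, P (p i)) /\
    (forall x, w x = \sum_(i < k) lam i * p i x).

Definition MC (R : realType) (n : nat) (V : {set {set 'I_n}})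
    (E : {set {set {set 'I_n}}}) (w : {set 'I_n} -> R) : Prop :=
  conv (@SH R n V E) w.

Definition proj (R : realType) (n : nat) (V : {set {set 'I_n}})
    (E : {set {set {set 'I_n}}}) (w : {set 'I_n} -> R) : {set 'I_n} -> R :=
  fun J => if J \in JH V E then w J else 0.

(* Main.v *)
Require Import Defs.
From HB Require Import structures.
From mathcomp Require Import all_boot all_order all_algebra.
From mathcomp Require Import reals.
Import Order.TTheory GRing.Theory Num.Theory.
Local Open Scope ring_scope.
Set Implicit Arguments. Unset Strict Implicit.

Lemma Je_meet n (e : {set {set 'I_n}}) J I :
  J \in Je e -> I \in e -> exists i, i \in J :&: I.
Proof.
rewrite inE => /andP[_ /forall_inP H] /H h.
by have /cards1P [i hi] := h; exists i; rewrite hi set11.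
Qed.

Lemma edge_sub n (V : {set {set 'I_n}}) E e :
  is_hypergraph V E -> e \in Lv V :|: E -> e \subset V /\ exists I, I \in e.
Proof.
move=> [_ [_ HE]]; rewrite inE => /orP[/imsetP[I IV ->]|/HE[sub c2]].
  by split; [rewrite sub1set | exists I; rewrite set11].
split=> //; have : (0 < #|e|)%N by apply: leq_trans c2.
by rewrite card_gt0 => /set0Pn [I HI]; exists I.
Qed.

Lemma JH_nonempty n (V : {set {set 'I_n}}) E J :
  is_hypergraph V E -> J \in JH V E -> exists i, i \in J.
Proof.
move=> hH /bigcupP [e he hJ]; have [_ [I HI]] := edge_sub hH he.
by have [i] := Je_meet hJ HI; rewrite inE => /andP[? _]; exists i.
Qed.

Lemma JH_elt n (V : {set {set 'I_n}}) E J i :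
  is_hypergraph V E -> J \in JH V E -> i \in J -> exists2 I, I \in V & i \in I.
Proof.
move=> hH /bigcupP [e he]; have [sub _] := edge_sub hH he.
rewrite inE => /andP[/subsetP sJ _] /sJ /bigcupP [I HI iI].
by exists I => //; apply: (subsetP sub).
Qed.

Lemma single_JH n (V : {set {set 'I_n}}) E I i :
  I \in V -> i \in I -> [set i] \in JH V E.
Proof.
move=> IV iI; apply/bigcupP; exists [set I].
  by rewrite inE; apply/orP; left; apply: imset_f.
rewrite inE big_set1 sub1set iI /=; apply/forall_inP => I'.
rewrite inE => /eqP ->; have -> : [set i] :&: I = [set i].
  by apply/setIidPl; rewrite sub1set.
by rewrite cards1.
Qed.

Lemma single_JH' n (V : {set {set 'I_n}}) E J i :
  is_hypergraph V E -> J \in JH V E -> i \in J -> [set i] \in JH V E.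
Proof. by move=> hH hJ hi; have [I IV iI] := JH_elt hH hJ hi; apply: single_JH iI. Qed.

Lemma SH_pt (R : realType) n (V : {set {set 'I_n}}) E (p : {set 'I_n} -> R) J :
  is_hypergraph V E -> SH V E p -> J \in JH V E -> p J = \prod_(i in J) p [set i].
Proof.
move=> hH [_ [_ [_ Hp]]] hJ; case: (ltnP 1 #|J|) => c; first exact: Hp.
have [i iJ] := JH_nonempty hH hJ.
have : #|J| == 1%N.
  by rewrite eqn_leq c /= card_gt0; apply/set0Pn; exists i.
by move=> /cards1P [j ->]; rewrite big_set1.
Qed.

Lemma SH_bin (R : realType) n (V : {set {set 'I_n}}) E (p : {set 'I_n} -> R) J :
  SH V E p -> p J = 0 \/ p J = 1.
Proof.
move=> [Hs [Hb _]]; case: (boolP (J \in JH V E)) => hJ; first exact: Hb.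
by left; apply: Hs.
Qed.

Lemma SH_ge0 (R : realType) n (V : {set {set 'I_n}}) E (p : {set 'I_n} -> R) J :
  SH V E p -> 0 <= p J.
Proof. by move=> /(SH_bin J) [->|->]. Qed.

Lemma SH_unique (R : realType) n (V : {set {set 'I_n}}) E (p : {set 'I_n} -> R) I i j :
  SH V E p -> I \in V -> i \in I -> p [set i] = 1 -> j \in I -> j != i -> p [set j] = 0.
Proof.
move=> hp IV iI pi jI ji; have [_ [_ [Hs _]]] := hp.
have := Hs I IV; rewrite (bigD1 i) //= pi => /eqP; rewrite -[X in _ == X]addr0 => /eqP /addrI h.
by apply: (psumr_eq0P _ h) => [k _|]; [apply: SH_ge0 hp | rewrite jI ji].
Qed.

Lemma SH_exists (R : realType) n (V : {set {set 'I_n}}) E (p : {set 'I_n} -> R) I :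
  SH V E p -> I \in V -> exists2 i, i \in I & p [set i] = 1.
Proof.
move=> hp IV; have [_ [_ [Hs _]]] := hp.
case: (boolP [exists i in I, p [set i] == 1]) => [/exists_inP [i ? /eqP]|h].
  by exists i.
have := Hs I IV; rewrite big1 => [/eqP|i iI]; first by rewrite eq_sym oner_eq0.
case: (SH_bin [set i] hp) => // e1; case/negP: h; apply/exists_inP; exists i => //.
by rewrite e1.
Qed.

Lemma JH_mono n (V1 V : {set {set 'I_n}}) (E1 E : {set {set {set 'I_n}}}) :
  V1 \subset V -> E1 \subset E -> JH V1 E1 \subset JH V E.
Proof.
move=> sV sE; apply/subsetP => J /bigcupP [e he hJ]; apply/bigcupP; exists e => //.
move: he; rewrite !inE => /orP [h|h]; apply/orP; [left|right].
  by move: h; apply/subsetP/imsetS.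
by apply: (subsetP sE).
Qed.

Lemma proj_SH (R : realType) n (V : {set {set 'I_n}}) E V1 E1 (p : {set 'I_n} -> R) :
  is_hypergraph V1 E1 -> V1 \subset V -> JH V1 E1 \subset JH V E ->
  SH V E p -> SH V1 E1 (proj V1 E1 p).
Proof.
move=> hH1 sV sJ [Hs [Hb [Hsum Hp]]]; split; [|split; [|split]].
- by move=> J /negbTE h; rewrite /proj h.
- by move=> J hJ; rewrite /proj hJ; apply: Hb; apply: (subsetP sJ).
- move=> I IV; rewrite -(Hsum I (subsetP sV _ IV)); apply: eq_bigr => i iI.
  by rewrite /proj (single_JH E1 IV iI).
- move=> J hJ c; rewrite /proj hJ Hp //; last by apply: (subsetP sJ).
  by apply: eq_bigr => i iJ; rewrite (single_JH' hH1 hJ iJ).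
Qed.

Definition pt (R : realType) n (V : {set {set 'I_n}}) (E : {set {set {set 'I_n}}})
  (x : 'I_n -> R) (J : {set 'I_n}) : R :=
  if J \in JH V E then \prod_(i in J) x i else 0.

Lemma pt_SH (R : realType) n (V : {set {set 'I_n}}) E (x : 'I_n -> R) :
  is_hypergraph V E -> (forall i, x i = 0 \/ x i = 1) ->
  (forall I, I \in V -> \sum_(i in I) x i = 1) -> SH V E (pt V E x).
Proof.
move=> hH hb hs.
have ps : forall J i, J \in JH V E -> i \in J -> pt V E x [set i] = x i.
  by move=> J i hJ iJ; rewrite /pt (single_JH' hH hJ iJ) big_set1.
split; [|split; [|split]].
- by move=> J /negbTE h; rewrite /pt h.
- move=> J hJ; rewrite /pt hJ; apply: (big_ind (fun v => v = 0 \/ v = 1)).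
  + by right.
  + by move=> a b [->|->] [->|->]; rewrite ?mul0r ?mulr0 ?mulr1; auto.
  + by move=> i _; apply: hb.
- move=> I IV; rewrite -(hs I IV); apply: eq_bigr => i iI.
  by rewrite /pt (single_JH E IV iI) big_set1.
- move=> J hJ _; rewrite {1}/pt hJ; apply: eq_bigr => i iJ.
  by rewrite (ps J).
Qed.

Lemma conv_fin (R : realType) (T : Type) (I : finType) (lam : I -> R)
  (p : I -> T -> R) (P : (T -> R) -> Prop) (w : T -> R) :
  (forall t, 0 <= lam t) -> \sum_t lam t = 1 -> (forall t, P (p t)) ->
  (forall x, w x = \sum_t lam t * p t x) -> conv P w.
Proof.
move=> h0 h1 hP hw.
have rI : forall F : I -> R, \sum_t F t = \sum_(j < #|I|) F (enum_val j).
  move=> F; rewrite (reindex (@enum_val I xpredT)) //.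
  by apply: onW_bij; apply: enum_val_bij.
exists #|I|, (fun j => lam (enum_val j)), (fun j => p (enum_val j)).
split; [by []|split; [by rewrite -rI|split; [by []|]]].
by move=> x; rewrite hw rI.
Qed.

Definition U0 n (e0 : {set {set 'I_n}}) : {set 'I_n} := \bigcup_(I in e0) I.
Definition Jt (R : realType) n (e0 : {set {set 'I_n}}) (p : {set 'I_n} -> R) : {set 'I_n} :=
  [set i in U0 e0 | p [set i] == 1].
Definition agree (R : realType) n (e0 : {set {set 'I_n}}) (p q : {set 'I_n} -> R) : bool :=
  [forall i in U0 e0, p [set i] == q [set i]].

Lemma agree_sym (R : realType) n (e0 : {set {set 'I_n}}) (p q : {set 'I_n} -> R) :
  agree e0 p q = agree e0 q p.
Proof.
by apply/forall_inP/forall_inP => h i /h; rewrite eq_sym.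
Qed.

Lemma agree_Jt (R : realType) n (e0 : {set {set 'I_n}}) (p q : {set 'I_n} -> R) :
  agree e0 p q -> Jt e0 p = Jt e0 q.
Proof.
move=> /forall_inP h; apply/setP => i; rewrite !inE.
by case: (boolP (i \in U0 e0)) => //= /h /eqP ->.
Qed.

Lemma Jt_Je (R : realType) n (V : {set {set 'I_n}}) E (e0 : {set {set 'I_n}}) (p : {set 'I_n} -> R) :
  e0 \subset V -> SH V E p -> Jt e0 p \in Je e0.
Proof.
move=> sV hp; rewrite inE; apply/andP; split.
  by apply/subsetP => i; rewrite inE => /andP[].
apply/forall_inP => I Ie; have IV := subsetP sV _ Ie.
have [i0 iI p1] := SH_exists hp IV.
apply/cards1P; exists i0; apply/setP => j; rewrite !inE.
case: (eqVneq j i0) => [->|ji].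
  by rewrite p1 eqxx iI !andbT /U0; apply/bigcupP; exists I.
apply: negbTE; apply/negP => /andP[/andP[_ /eqP pj] jI].
by move: pj; rewrite (SH_unique hp IV iI p1 jI ji) => /eqP; rewrite eq_sym oner_eq0.
Qed.

Lemma Jt_val (R : realType) n (V1 : {set {set 'I_n}}) E1 (V' : {set {set 'I_n}}) E' (e0 : {set {set 'I_n}})
  (p q : {set 'I_n} -> R) :
  e0 \subset V1 -> e0 \subset V' -> Je e0 \subset JH V' E' -> is_hypergraph V' E' ->
  SH V1 E1 p -> SH V' E' q -> q (Jt e0 p) = (agree e0 p q)%:R.
Proof.
move=> s1 s' sJ hH' hp hq.
have hJ : Jt e0 p \in JH V' E' by apply: (subsetP sJ); apply: Jt_Je hp.
rewrite (SH_pt hH' hq hJ); case: (boolP (agree e0 p q)) => [/forall_inP ha|na].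
  rewrite big1 // => i; rewrite inE => /andP[iU /eqP pi].
  by have /eqP <- := ha i iU.
move: na; rewrite negb_forall_in => /exists_inP [i iU ne].
have /bigcupP [I Ie iI] : i \in \bigcup_(I in e0) I := iU.
have IV1 := subsetP s1 _ Ie; have IV' := subsetP s' _ Ie.
have [i0 i0I p1] := SH_exists hp IV1.
have q0 : q [set i0] = 0.
  case: (SH_bin [set i0] hq) => // q1; case/negP: ne.
  case: (eqVneq i i0) => [->|ii0]; first by rewrite p1 q1.
  by rewrite (SH_unique hp IV1 i0I p1 iI ii0) (SH_unique hq IV' i0I q1 iI ii0).
rewrite (bigD1 i0) /= ?q0 ?mul0r //.
by rewrite inE p1 eqxx andbT; rewrite /U0; apply/bigcupP; exists I.
Qed.

Lemma vert_unique n (V : {set {set 'I_n}}) E I1 I2 i :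
  is_hypergraph V E -> I1 \in V -> I2 \in V -> i \in I1 -> i \in I2 -> I1 = I2.
Proof.
move=> [_ [hd _]] h1 h2 i1 i2; apply/eqP; apply/negP => /negP ne.
by have := disjointFr (hd _ _ h1 h2 ne) i1; rewrite i2.
Qed.

Lemma JH_union n (V1 V2 : {set {set 'I_n}}) (E1 E2 : {set {set {set 'I_n}}}) J :
  J \in JH (V1 :|: V2) (E1 :|: E2) -> J \in JH V1 E1 \/ J \in JH V2 E2.
Proof.
move=> /bigcupP [e he hJ]; move: he; rewrite /Lv imsetU !in_setU => /orP [/orP [h|h]|/orP [h|h]].
- by left; apply/bigcupP; exists e => //; rewrite in_setU h.
- by right; apply/bigcupP; exists e => //; rewrite in_setU h.
- by left; apply/bigcupP; exists e => //; rewrite in_setU h orbT.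
- by right; apply/bigcupP; exists e => //; rewrite in_setU h orbT.
Qed.

Lemma forward (R : realType) n (V : {set {set 'I_n}}) (E : {set {set {set 'I_n}}}) V1 E1 (w : {set 'I_n} -> R) :
  is_hypergraph V1 E1 -> V1 \subset V -> E1 \subset E ->
  MC V E w -> MC V1 E1 (proj V1 E1 w).
Proof.
move=> hH1 sV sE [k [lam [p [h0 [h1 [hP hw]]]]]].
exists k, lam, (fun i => proj V1 E1 (p i)); split; [by []|split; [by []|split]].
  by move=> i; apply: proj_SH (hP i) => //; apply: JH_mono.
move=> J; rewrite /proj; case: ifP => _; first exact: hw.
by rewrite big1 // => i _; rewrite mulr0.
Qed.

Lemma glue (R : realType) n (V : {set {set 'I_n}}) (E : {set {set {set 'I_n}}})
    (V1 : {set {set 'I_n}}) (E1 : {set {set {set 'I_n}}})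
    (V2 : {set {set 'I_n}}) (E2 : {set {set {set 'I_n}}}) (w : {set 'I_n} -> R) :
  is_hypergraph V E -> is_hypergraph V1 E1 -> is_hypergraph V2 E2 ->
  V = V1 :|: V2 -> E = E1 :|: E2 ->
  V1 :&: V2 \in (Lv V1 :|: E1) :&: (Lv V2 :|: E2) ->
  supported V E w ->
  MC V1 E1 (proj V1 E1 w) -> MC V2 E2 (proj V2 E2 w) -> MC V E w.
Proof.
move=> hH hH1 hH2 eV eE he0 hsupp [k1 [lam [p [l0 [l1 [hp hw1]]]]]]
  [k2 [mu [q [m0 [m1 [hq hw2]]]]]].
set e0 := V1 :&: V2.
have [he1 he2] : e0 \in Lv V1 :|: E1 /\ e0 \in Lv V2 :|: E2.
  by move: he0; rewrite in_setI => /andP.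
have sJ1 : Je e0 \subset JH V1 E1.
  by apply/subsetP => J hJ; apply/bigcupP; exists e0.
have sJ2 : Je e0 \subset JH V2 E2.
  by apply/subsetP => J hJ; apply/bigcupP; exists e0.
have s1 : e0 \subset V1 by apply: subsetIl.
have s2 : e0 \subset V2 by apply: subsetIr.
have sV1 : V1 \subset V by rewrite eV subsetUl.
have sV2 : V2 \subset V by rewrite eV subsetUr.
have wJ1 : forall J, J \in JH V1 E1 -> w J = \sum_a lam a * p a J.
  by move=> J hJ; rewrite -hw1 /proj hJ.
have wJ2 : forall J, J \in JH V2 E2 -> w J = \sum_b mu b * q b J.
  by move=> J hJ; rewrite -hw2 /proj hJ.
have Jp1 : forall a, Jt e0 (p a) \in JH V1 E1.
  by move=> a; apply: (subsetP sJ1); apply: Jt_Je (hp a).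
have Jp2 : forall a, Jt e0 (p a) \in JH V2 E2.
  by move=> a; apply: (subsetP sJ2); apply: Jt_Je (hp a).
have Jq1 : forall b, Jt e0 (q b) \in JH V1 E1.
  by move=> b; apply: (subsetP sJ1); apply: Jt_Je (hq b).
have Jq2 : forall b, Jt e0 (q b) \in JH V2 E2.
  by move=> b; apply: (subsetP sJ2); apply: Jt_Je (hq b).
have pq : forall a b, q b (Jt e0 (p a)) = (agree e0 (p a) (q b))%:R.
  by move=> a b; apply: (Jt_val s1 s2 sJ2 hH2 (hp a) (hq b)).
have qp : forall a b, p a (Jt e0 (q b)) = (agree e0 (p a) (q b))%:R.
  by move=> a b; rewrite agree_sym; apply: (Jt_val s2 s1 sJ1 hH1 (hq b) (hp a)).
have Wge : forall J, 0 <= w J.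
  move=> J; case: (boolP (J \in JH V1 E1)) => hJ.
    by rewrite wJ1 //; apply: sumr_ge0 => a _; apply: mulr_ge0 => //; apply: SH_ge0 (hp a).
  case: (boolP (J \in JH V E)) => hJ'; last by rewrite hsupp.
  move: hJ'; rewrite eV eE => /JH_union [h|hJ2]; first by rewrite h in hJ.
  by rewrite wJ2 //; apply: sumr_ge0 => b _; apply: mulr_ge0 => //; apply: SH_ge0 (hq b).
have lamW : forall a, lam a <= w (Jt e0 (p a)).
  move=> a; rewrite (wJ1 _ (Jp1 a)) (bigD1 a) //=.
  have -> : p a (Jt e0 (p a)) = 1.
    by rewrite (Jt_val s1 s1 sJ1 hH1 (hp a) (hp a)); have -> : agree e0 (p a) (p a) by apply/forall_inP.
  rewrite mulr1 lerDl; apply: sumr_ge0 => a' _; apply: mulr_ge0 => //; apply: SH_ge0 (hp a').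
have muW : forall b, mu b <= w (Jt e0 (q b)).
  move=> b; rewrite (wJ2 _ (Jq2 b)) (bigD1 b) //=.
  have -> : q b (Jt e0 (q b)) = 1.
    by rewrite (Jt_val s2 s2 sJ2 hH2 (hq b) (hq b)); have -> : agree e0 (q b) (q b) by apply/forall_inP.
  rewrite mulr1 lerDl; apply: sumr_ge0 => b' _; apply: mulr_ge0 => //; apply: SH_ge0 (hq b').
have cancel_W : forall (l W : R), 0 <= l -> l <= W -> l * W / W = l.
  move=> l W hl hW; case: (eqVneq W 0) => [W0|Wn0]; last by rewrite mulfK.
  have hl0 : l = 0 by apply/eqP; rewrite eq_le hl andbT -W0.
  by rewrite hl0 !mul0r.
pose wt a b := lam a * mu b * (agree e0 (p a) (q b))%:R / w (Jt e0 (p a)).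
have Sb : forall a, \sum_b wt a b = lam a.
  move=> a; rewrite -[RHS](cancel_W (lam a) (w (Jt e0 (p a)))) //.
  rewrite [X in lam a * X](wJ2 _ (Jp2 a)).
  rewrite mulr_sumr mulr_suml; apply: eq_bigr => b _.
  by rewrite /wt pq !mulrA.
have Sa : forall b, \sum_a wt a b = mu b.
  move=> b; rewrite -[RHS](cancel_W (mu b) (w (Jt e0 (q b)))) //.
  rewrite [X in mu b * X](wJ1 _ (Jq1 b)).
  rewrite mulr_sumr mulr_suml; apply: eq_bigr => a _.
  rewrite /wt qp; case: (boolP (agree e0 (p a) (q b))) => ha.
    by rewrite (agree_Jt ha) !mulr1 [mu b * _]mulrC.
  by rewrite !mulr0 !mul0r.
pose U1 := \bigcup_(I in V1) I.
pose x a b i := if i \in U1 then p a [set i] else q b [set i].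
pose r a b := pt V E (x a b).
have pb : forall F : 'I_k1 * 'I_k2 -> R, \sum_t F t = \sum_a \sum_b F (a, b).
  by move=> F; rewrite pair_big; apply: eq_bigr => [[a b]].
apply: (@conv_fin R _ _ (fun t => wt t.1 t.2) (fun t => r t.1 t.2)).
- move=> [a b] /=; rewrite /wt; apply: mulr_ge0; last by rewrite invr_ge0.
  by rewrite !mulr_ge0 // ler0n.
- by rewrite pb -l1; apply: eq_bigr => a _; rewrite -Sb.
- move=> [a b] /=; apply: (pt_SH hH).
    by move=> i; rewrite /x; case: ifP => _; [apply: SH_bin (hp a)|apply: SH_bin (hq b)].
  move=> I; rewrite eV in_setU => /orP [IV1|IV2].
    have [_ [_ [hs _]]] := hp a; rewrite -(hs I IV1); apply: eq_bigr => i iI.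
    by rewrite /x ifT //; apply/bigcupP; exists I.
  case: (boolP (I \in V1)) => IV1.
    have [_ [_ [hs _]]] := hp a; rewrite -(hs I IV1); apply: eq_bigr => i iI.
    by rewrite /x ifT //; apply/bigcupP; exists I.
  have [_ [_ [hs _]]] := hq b; rewrite -(hs I IV2); apply: eq_bigr => i iI.
  rewrite /x ifF //; apply/negbTE/negP => /bigcupP [I1 I1V iI1].
  have eI : I1 = I by apply: (vert_unique hH (subsetP sV1 _ I1V) (subsetP sV2 _ IV2) iI1 iI).
  by move: IV1; rewrite -eI I1V.
- move=> J; rewrite pb; case: (boolP (J \in JH V E)) => hJ; last first.
    rewrite hsupp //; symmetry; apply: big1 => a _; apply: big1 => b _.
    by rewrite /= /r /pt (negbTE hJ) mulr0.
  have := hJ; rewrite eV eE => /JH_union [hJ1|hJ2].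
    rewrite wJ1 //; apply: eq_bigr => a _ /=.
    have e : forall b, r a b J = p a J.
      move=> b; rewrite /r /pt hJ (SH_pt hH1 (hp a) hJ1); apply: eq_bigr => i iJ.
      have [I IV iI] := JH_elt hH1 hJ1 iJ.
      by rewrite /x ifT //; apply/bigcupP; exists I.
    transitivity (\sum_b wt a b * p a J); first by rewrite -mulr_suml Sb.
    by apply: eq_bigr => b _; rewrite e.
  rewrite wJ2 // exchange_big /=; apply: eq_bigr => b _ /=.
  have e : forall a, wt a b * r a b J = wt a b * q b J.
    move=> a; case: (boolP (agree e0 (p a) (q b))) => ha; last first.
      by rewrite /wt (negbTE ha) !mulr0 !mul0r.
    congr (_ * _); rewrite /r /pt hJ (SH_pt hH2 (hq b) hJ2); apply: eq_bigr => i iJ.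
    rewrite /x; case: ifP => // /bigcupP [I1 I1V iI1].
    have [I2 I2V iI2] := JH_elt hH2 hJ2 iJ.
    have eI : I1 = I2 by apply: (vert_unique hH (subsetP sV1 _ I1V) (subsetP sV2 _ I2V) iI1 iI2).
    have iU : i \in U0 e0 by rewrite /U0; apply/bigcupP; exists I1; rewrite // in_setI I1V eI I2V.
    by move/forall_inP: ha => /(_ i iU) /eqP.
  transitivity (\sum_a wt a b * q b J); first by rewrite -mulr_suml Sa.
  by apply: eq_bigr => a _; rewrite e.
Qed.

Unset Implicit Arguments.
Set Strict Implicit.

Theorem theorem4p2 (R : realType) (n : nat)
    (V : {set {set 'I_n}}) (E : {set {set {set 'I_n}}})
    (V1 : {set {set 'I_n}}) (E1 : {set {set {set 'I_n}}})
    (V2 : {set {set 'I_n}}) (E2 : {set {set {set 'I_n}}}) :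
  (0 < n)%N -> is_hypergraph V E -> is_hypergraph V1 E1 -> is_hypergraph V2 E2 ->
  V = V1 :|: V2 -> E = E1 :|: E2 ->
  V1 :&: V2 \in (Lv V1 :|: E1) :&: (Lv V2 :|: E2) ->
  forall w : {set 'I_n} -> R, supported V E w ->
    (MC V E w <-> MC V1 E1 (proj V1 E1 w) /\ MC V2 E2 (proj V2 E2 w)).
Proof.
move=> _ hH hH1 hH2 eV eE he0 w hs; split.
  move=> hw; split; apply: (forward _ _ _ hw) => //; rewrite ?eV ?eE ?subsetUl ?subsetUr //.
move=> [h1 h2]; exact: (glue hH hH1 hH2 eV eE he0 hs h1 h2).
Qed.
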